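(* Let $(Y,\preceq,\prec,\to)$ be a solid vector space, let $b\in Y$ with $b\succ0$, and let $\|\cdot\|$ be the Minkowski functional of $[-b,b]$. Then: (i) the monotone norm $\|\cdot\|$ generates the order topology on $Y$; (ii) for a sequence $(x_n)$ in $Y$, $x_n\to x$ implies $\|x_n-x\|\to0$.
   Context: Vector space with convergence: a real vector space $Y$ with a relation $\to$ between sequences in $Y$ and points of $Y$ (uniqueness of limits not assumed) such that (C1) $x_n\to x$, $y_n\to y$ imply $x_n+y_n\to x+y$; (C2) $x_n\to x$, $\lambda\in\mathbb R$ imply $\lambda x_n\to\lambda x$; (C3) $\lambda_n\to\lambda$ in $\mathbb R$ imply $\lambda_n x\to\lambda x$. $A\subseteq Y$ is open if $x_n\to x\in A$ implies $x_n\in A$ for all but finitely many $n$; closed if $x_n\to x$, $x_n\in A$ $\forall n$ imply $x\in A$; $A^\circ$ is the union of all open subsets of $A$. A cone is a nonempty closed $K$ with $\lambda K\subseteq K$ ($\lambda\ge0$), $K+K\subseteq K$, $K\cap(-K)=\{0\}$; solid if $K\ne\{0\}$, $K^\circ\ne\emptyset$. A vector ordering is a partial order $\preceq$ with (V1) $x\preceq y\Rightarrow x+z\preceq y+z$; (V2) $\lambda\ge0$, $x\preceq y\Rightarrow\lambda x\preceq\lambda y$; (V3) $x_n\to x$, $y_n\to y$, $x_n\preceq y_n$ $\forall n\Rightarrow x\preceq y$. Solid vector space: positive cone $K=\{x:x\succeq0\}$ solid, with $x\prec y$ iff $y-x\in K^\circ$. $[a,b]=\{x:a\preceq x\preceq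 b\}$; Minkowski functional of $A$: $\|x\|=\inf\{\lambda\ge0:x\in\lambda A\}$ (it is a norm for $A=[-b,b]$, $b\succ0$). Monotone norm: $\|x\|\le\|y\|$ whenever $0\preceq x\preceq y$. Order topology: the topology on $Y$ with basis the open intervals $(a,b)=\{x:a\prec x\prec b\}$, $a\prec b$. *)

(* Defs.v *)
From HB Require Import structures.
From mathcomp Require Import all_boot all_order all_algebra.
From mathcomp Require Import all_classical all_reals all_analysis.
Set Implicit Arguments. Unset Strict Implicit. Unset Printing Implicit Defensive.
Import Order.TTheory GRing.Theory Num.Theory numFieldNormedType.Exports.
Local Open Scope classical_set_scope.
Local Open Scope ring_scope.

Section Defs.
Variables (R : realType) (Y : lmodType R).
(* a convergence relation: conv xs x  means  xs --> x  (limits not unique) *)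
Variable conv : (nat -> Y) -> Y -> Prop.

Definition conv_space : Prop :=
  [/\ (forall (xs ys : nat -> Y) x y, conv xs x -> conv ys y ->
          conv (fun n => xs n + ys n) (x + y)),
      (forall (xs : nat -> Y) x (l : R), conv xs x ->
          conv (fun n => l *: xs n) (l *: x)) &
      (forall (ls : nat -> R) (l : R) (x : Y), ls @ \oo --> l ->
          conv (fun n => ls n *: x) (l *: x))].

Definition seq_open (A : set Y) : Prop :=
  forall xs x, conv xs x -> A x -> exists N, forall n, (N <= n)%N -> A (xs n).

Definition seq_closed (A : set Y) : Prop :=
  forall xs x, conv xs x -> (forall n, A (xs n)) -> A x.

Definition sinterior (A : set Y) : set Y :=
  [set x | exists U, [/\ seq_open U, U `<=` A & U x]].

Definition is_cone (K : set Y) : Prop :=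
  [/\ K !=set0, seq_closed K,
      (forall l x, 0 <= l -> K x -> K (l *: x)),
      (forall x y, K x -> K y -> K (x + y)) &
      (forall x, K x -> K (- x) -> x = 0)].

Definition solid_cone (K : set Y) : Prop :=
  [/\ is_cone K, K <> [set 0] & sinterior K !=set0].

Variable le : Y -> Y -> Prop.

Definition vector_ordering : Prop :=
  [/\ ((forall x, le x x) /\ (forall x y, le x y -> le y x -> x = y)),
      (forall x y z, le x y -> le y z -> le x z),
      (forall x y z, le x y -> le (x + z) (y + z)),
      (forall (l : R) x y, 0 <= l -> le x y -> le (l *: x) (l *: y)) &
      (forall xs ys x y, conv xs x -> conv ys y -> (forall n, le (xs n) (ys n)) ->
          le x y)].

Definition pos_cone : set Y := [set x | le 0 x].

Definition slt (x y : Y) : Prop := sinterior pos_cone (y - x).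

Definition solid_vector_space : Prop :=
  [/\ conv_space, vector_ordering & solid_cone pos_cone].

Definition ointerval (a b : Y) : set Y := [set x | slt a x /\ slt x b].

Definition ointerval_closed (a b : Y) : set Y := [set x | le a x /\ le x b].

Definition minkowski_functional (A : set Y) (x : Y) : R :=
  inf [set l : R | 0 <= l /\ exists a, A a /\ x = l *: a].

Definition norm_open (nm : Y -> R) (U : set Y) : Prop :=
  forall x, U x -> exists r : R, 0 < r /\ [set y | nm (y - x) < r] `<=` U.

(* order topology: open sets are unions of open intervals (a,b), a < b *)
Definition order_open (U : set Y) : Prop :=
  forall x, U x -> exists a b, [/\ slt a b, ointerval a b x & ointerval a b `<=` U].

End Defs.

(* Main.v *)
Require Import Defs.
From HB Require Import structures.
From mathcomp Require Import all_boot all_order all_algebra.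
From mathcomp Require Import all_classical all_reals all_analysis.
From mathcomp Require Import lra.
Import Order.TTheory GRing.Theory Num.Theory numFieldNormedType.Exports.
Local Open Scope classical_set_scope.
Local Open Scope ring_scope.

Theorem theorem7p7 (R : realType) (Y : lmodType R)
  (conv : (nat -> Y) -> Y -> Prop) (le : Y -> Y -> Prop)
  (HY : solid_vector_space conv le) (b : Y) (hb : slt conv le 0 b) :
  let nm := minkowski_functional (ointerval_closed le (- b) b) in
  (forall U : set Y, norm_open nm U <-> order_open conv le U) /\
  (forall (xs : nat -> Y) (x : Y), conv xs x ->
     (fun n => nm (xs n - x)) @ \oo --> 0).
Proof.
move=> nm.
case: HY => [[C1 C2 C3] [[lerefl _] letr V1 V2 V3] _].
have Cc : forall x, conv (fun _ => x) x.
  move=> x; have := C3 (fun _ => 1) 1 x (cvg_cst _).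
  by rewrite scale1r; apply.
have CN : forall ys y, conv ys y -> conv (fun n => - ys n) (- y).
  move=> ys y /(C2 _ _ (-1)); rewrite scaleN1r.
  by rewrite (_ : (fun n => -1 *: ys n) = fun n => - ys n) //; apply: funext => n; rewrite scaleN1r.
have Cs : forall (u w : Y), conv (fun n => u - harmonic n *: w) u.
  move=> u w; have := C1 _ _ _ _ (Cc u) (CN _ _ (C3 _ _ w (@cvg_harmonic R))).
  by rewrite scale0r oppr0 addr0.
have lesub1 : forall x y, le x y -> le 0 (y - x).
  by move=> x y /(V1 _ _ (- x)); rewrite subrr.
have lesub2 : forall x y, le 0 (y - x) -> le x y.
  by move=> x y /(V1 _ _ x); rewrite add0r subrK.
have leN : forall x y, le x y -> le (- y) (- x).
  move=> x y /(V1 _ _ (- x - y)); rewrite addrA subrr add0r addrC subrK //.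
have intsub : forall A, sinterior conv A `<=` A by move=> A x [U [_ ]]; apply.
have intopen : forall A, seq_open conv (sinterior conv A).
  move=> A xs x cx [U [oU UA Ux]]; have [N HN] := oU _ _ cx Ux.
  by exists N => n /HN Un; exists U.
have evK : forall ys y, conv ys y -> slt conv le 0 y -> exists N, forall n, (N <= n)%N -> le 0 (ys n).
  move=> ys y cy; rewrite /slt subr0 => hy; have [N HN] := intopen _ _ _ cy hy.
  by exists N => n /HN /intsub.
have Kadd : forall x y, le 0 x -> le 0 y -> le 0 (x + y).
  by move=> x y hx hy; apply: letr hy _; have := V1 _ _ y hx; rewrite add0r.
have Kscale : forall l x, 0 <= l -> le 0 x -> le 0 (l *: x).
  by move=> l x l0 hx; have := V2 _ _ _ l0 hx; rewrite scaler0.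
have intmono : forall u v, sinterior conv (pos_cone le) u -> le u v -> sinterior conv (pos_cone le) v.
  move=> u v [U [oU UK Uu]] uv.
  exists [set y | U (y - (v - u))]; split.
  - by move=> xs x cx Ux; have := oU _ _ (C1 _ _ _ _ cx (Cc (- (v - u)))) Ux.
  - move=> y /UK /= hy; exact: letr (lesub1 _ _ uv) (lesub2 _ _ hy).
  - by rewrite /= opprB addrC subrK.
have intscale : forall t u, 0 < t -> sinterior conv (pos_cone le) u -> sinterior conv (pos_cone le) (t *: u).
  move=> t u t0 [U [oU UK Uu]]; exists [set y | U (t^-1 *: y)]; split.
  - by move=> xs x cx Ux; have := oU _ _ (C2 _ _ t^-1 cx) Ux.
  - move=> y /UK hy; have := V2 t _ _ (ltW t0) hy.
    by rewrite scaler0 scalerA mulfV ?gt_eqF // scale1r.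
  - by rewrite /= scalerA mulVf ?gt_eqF // scale1r.
have bint : sinterior conv (pos_cone le) b by move: hb; rewrite /slt subr0.
have bK : le 0 b by exact: intsub bint.
have absorb : forall z, exists l, [/\ 0 < l, le (-(l*:b)) z & le z (l*:b)].
  move=> z; have [N1 H1] := evK _ _ (Cs b z) hb; have [N2 H2] := evK _ _ (Cs b (- z)) hb.
  have h1 := H1 (maxn N1 N2) (leq_maxl _ _); have h2 := H2 (maxn N1 N2) (leq_maxr _ _).
  move: h1 h2; rewrite /=; set N := maxn N1 N2 => h1 h2.
  have l0 : 0 < (N.+1%:R : R) by exact: ltr0Sn.
  exists N.+1%:R; split => //.
  - apply: lesub2; move: h2; rewrite scalerN opprK => h2; have := V2 _ _ _ (ltW l0) h2.
    by rewrite scaler0 scalerDr scalerA mulfV ?gt_eqF // scale1r opprK addrC.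
  - apply: lesub2; have := V2 _ _ _ (ltW l0) h1.
    by rewrite scaler0 scalerBr scalerA mulfV ?gt_eqF // scale1r.
pose S z := [set l : R | 0 <= l /\ exists a, ointerval_closed le (-b) b a /\ z = l *: a].
have nmE : forall z, nm z = inf (S z) by [].
have memS : forall z l, 0 < l -> le (-(l*:b)) z -> le z (l*:b) -> S z l.
  move=> z l l0 h1 h2; split; first exact: ltW.
  have li : 0 <= l^-1 by rewrite invr_ge0 ltW.
  exists (l^-1 *: z); split; last by rewrite scalerA mulfV ?gt_eqF // scale1r.
  split.
  - have := V2 _ _ _ li h1.
    by rewrite scalerN scalerA mulVf ?gt_eqF // scale1r.
  - have := V2 _ _ _ li h2.
    by rewrite scalerA mulVf ?gt_eqF // scale1r.
have nmle : forall z l, 0 < l -> le (-(l*:b)) z -> le z (l*:b) -> nm z <= l.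
  move=> z l l0 h1 h2; rewrite nmE; apply: ge_inf; last exact: memS.
  by exists 0 => y [].
have Sne : forall z, S z !=set0.
  by move=> z; have [l [l0 h1 h2]] := absorb z; exists l; exact: memS.
have nmge0 : forall z, 0 <= nm z.
  by move=> z; rewrite nmE; apply: lb_le_inf => // y [].
have nmlt : forall z r, nm z < r -> exists l, [/\ 0 <= l, l < r, le (-(l*:b)) z & le z (l*:b)].
  move=> z r; rewrite nmE => /(inf_lt (Sne z)) [l [l0 [a [[h1 h2] ->]]] lr].
  exists l; split => //; last exact: V2.
  by have := V2 _ _ _ l0 h1; rewrite scalerN.
have lebt : forall l t, l <= t -> le (l *: b) (t *: b).
  move=> l t lt; apply: lesub2; rewrite -scalerBl; apply: Kscale => //.
  by rewrite subr_ge0.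
split.
  move=> U; split.
    move=> HU x Ux; have [r [r0 hr]] := HU x Ux.
    have h0 : 0 < r / 2 by rewrite divr_gt0.
    have hint := intscale _ _ h0 bint.
    have hK : le 0 ((r / 2) *: b) by exact: intsub hint.
    set h := (r / 2) *: b in hint hK *.
    exists (x - h), (x + h); split.
    - rewrite /slt; have -> : (x + h) - (x - h) = h + h by rewrite opprB addrC addrA subrK.
      by apply: intmono hint _; apply: lesub2; rewrite addrK.
    - split; rewrite /slt.
        by rewrite opprB addrC subrK.
      by rewrite addrC addKr.
    - move=> y [ha hc]; apply: hr; rewrite /=.
      apply: le_lt_trans (nmle _ (r/2) h0 _ _) _; last by lra.
        have := V1 _ _ (- x) (lesub2 _ _ (intsub _ _ ha)).
        by rewrite addrAC subrr add0r.
      have := V1 _ _ (- x) (lesub2 _ _ (intsub _ _ hc)).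
      by rewrite addrAC subrr add0r.
  move=> HU x Ux; have [a [c [ac [ax xc] sub]]] := HU x Ux.
  have [N1 H1] := intopen _ _ _ (Cs (x - a) b) ax.
  have [N2 H2] := intopen _ _ _ (Cs (c - x) b) xc.
  set N := maxn N1 N2.
  exists (harmonic N); split; first exact: harmonic_gt0.
  move=> y /nmlt [l [l0 lt h1 h2]]; apply: sub; split.
  - rewrite /slt; apply: intmono (H1 N (leq_maxl _ _)) _.
    have tl := leN _ _ (lebt _ _ (ltW lt)).
    have := V1 _ _ (x - a) (letr _ _ _ tl h1).
    by rewrite addrC addrA subrK.
  - rewrite /slt; apply: intmono (H2 N (leq_maxr _ _)) _.
    have := V1 _ _ (c - x) (leN _ _ (letr _ _ _ h2 (lebt _ _ (ltW lt)))).
    by rewrite [- _ + (c - x)]addrC [- (y - x) + _]addrC opprB addrA subrK.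
move=> xs x cx.
have cy : conv (fun n => xs n - x) 0 by have := C1 _ _ _ _ cx (Cc (-x)); rewrite subrr.
apply/cvgrPdist_le => e e0.
have he := intscale e b e0 bint.
have he' : slt conv le 0 (e *: b) by rewrite /slt subr0.
have c1 : conv (fun n => e *: b - (xs n - x)) (e *: b).
  by have := C1 _ _ _ _ (Cc (e *: b)) (CN _ _ cy); rewrite oppr0 addr0.
have c2 : conv (fun n => e *: b + (xs n - x)) (e *: b).
  by have := C1 _ _ _ _ (Cc (e *: b)) cy; rewrite addr0.
have [N1 H1] := evK _ _ c1 he'; have [N2 H2] := evK _ _ c2 he'.
exists (maxn N1 N2) => // n /= Nn.
have Nn1 : (N1 <= n)%N by apply: leq_trans Nn; exact: leq_maxl.
have Nn2 : (N2 <= n)%N by apply: leq_trans Nn; exact: leq_maxr.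
rewrite sub0r normrN ger0_norm //; apply: nmle => //.
  by apply: lesub2; rewrite opprK addrC; exact: H2.
by apply: lesub2; exact: H1.
Qed.
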